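(* Let $F$ be a field containing a primitive cube root of unity $q$. Let $L=F[x]/(x^3)$, graded by $\mathbb Z_3$ with $\deg x^k=k\bmod 3$, in the category of $\mathbb Z_3$-graded vector spaces with braiding $C(a\otimes b)=r(|b|,|a|)\,b\otimes a$, where $r(k,m)=q^{km}$, and with bracket $[a,b]=ab-r(|b|,|a|)\,ba$ for homogeneous $a,b$. Then $(L,[\ \,])$ is a braided m-Lie algebra and a (left) Jacobi braided Lie algebra, but it is not a strict Jacobi braided Lie algebra (the braided anti-symmetry $[\ \,]=-[\ \,]C_{L,L}$ fails), and there is no coalgebra structure $(\Delta,\varepsilon)$ on $L$ in this category making $(L,\Delta,\varepsilon,[\ \,])$ a (left) braided Lie algebra in the sense of Majid.
   Context: Braided m-Lie algebra: an object $L$ with morphism $[\ \,]:L\otimes L\to L$ such that there are an algebra $(A,m)$ in the category and a monomorphism $\phi:L\to A$ with $\phi[\ \,]=m(\phi\otimes\phi)-m(\phi\otimes\phi)C_{L,L}$. (BJI): with $C=C_{L,L}$, $[\ \,](L\otimes[\ \,]) + [\ \,](L\otimes[\ \,])(L\otimes C^{-1})(C\otimes L) + [\ \,](L\otimes[\ \,])(C^{-1}\otimes L)(L\otimes C) = 0$. A (left) Jacobi braided Lie algebra satisfies (BJI); a (left) strict Jacobi braided Lie algebra satisfies both (BJI) and (BAS): $[\ \,]=-[\ \,]C_{L,L}$. Majid's (left) braided Lie algebra: a coalgebra $(L,\Delta,\varepsilon)$ in the category (degree-preserving, coassociative, counital, with $F$ in degree $0$) with a morphism $[\ \,]$ such that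 (L1) $[\ \,](L\otimes[\ \,]) = [\ \,]([\ \,]\otimes[\ \,])(L\otimes C\otimes L)(\Delta\otimes L\otimes L)$; (L2) $C([\ \,]\otimes L)(L\otimes C)(\Delta\otimes L) = (L\otimes[\ \,])(\Delta\otimes L)$; (L3) $\Delta[\ \,] = ([\ \,]\otimes[\ \,])(L\otimes C\otimes L)(\Delta\otimes\Delta)$ and $\varepsilon[\ \,]=\varepsilon\otimes\varepsilon$. *)

(* Defs.v *)
From HB Require Import structures.
From mathcomp Require Import all_boot all_order all_algebra.

Set Implicit Arguments.
Unset Strict Implicit.
Unset Printing Implicit Defensive.

Import GRing.Theory.
Local Open Scope ring_scope.

(* L = F[x]/(x^3) has basis x^0, x^1, x^2 indexed by 'I_3, with deg x^k = k.
   L^{(x)n} has basis x^{i1} (x) ... (x) x^{in}, indexed by n-tuples of 'I_3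
   (L^{(x)0} = F, the unit object, in degree 0).
   A linear map f : L^{(x)n} -> L^{(x)m} is represented by its matrix
   coefficients: f b c = coefficient of the basis tensor c in f(b).
   We use seq-indexed coefficient functions; only the values on tuples of
   the right lengths matter (see [eqm]). *)

Section BraidedLie.
Variable F : fieldType.
Variable q : F.

Definition mor := seq 'I_3 -> seq 'I_3 -> F.

Definition eqm (n m : nat) (f g : mor) : Prop :=
  forall (b : n.-tuple 'I_3) (c : m.-tuple 'I_3), f b c = g b c.

Definition idm : mor := fun b c => (b == c)%:R.

Definition comp (k : nat) (g f : mor) : mor :=
  fun b d => \sum_(c : k.-tuple 'I_3) f b c * g c d.

Definition tensm (n1 m1 : nat) (f g : mor) : mor :=
  fun b c => f (take n1 b) (take m1 c) * g (drop n1 b) (drop m1 c).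

Definition degt (s : seq 'I_3) : nat := (\sum_(i <- s) (i : nat))%N %% 3.

Definition homog (n m : nat) (f : mor) : Prop :=
  forall (b : n.-tuple 'I_3) (c : m.-tuple 'I_3), f b c != 0 -> degt b = degt c.

Definition rq (k m : 'I_3) : F := q ^+ (k * m).

Definition braid : mor := fun b c =>
  match b, c with
  | [:: i; j], [:: k; l] => ((k == j) && (l == i))%:R * rq j i
  | _, _ => 0
  end.

Definition braid_inv : mor := fun b c =>
  match b, c with
  | [:: i; j], [:: k; l] => ((k == j) && (l == i))%:R * (rq i j)^-1
  | _, _ => 0
  end.

(* multiplication of F[x]/(x^3): x^i x^j = x^(i+j) if i+j < 3, else 0 *)
Definition mulL : mor := fun b c =>
  match b, c with
  | [:: i; j], [:: k] => ((i + j)%N == k)%:R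
  | _, _ => 0
  end.

Definition brL : mor := fun b c => mulL b c - comp 2 mulL braid b c.

Definition graded_algebra (A : algType F) (G : 'I_3 -> A -> Prop) : Prop :=
  [/\ forall k, G k 0 /\ (forall (c : F) (a b : A), G k a -> G k b -> G k (c *: a + b)),
      forall a : A, exists f : 'I_3 -> A, (forall k, G k (f k)) /\ a = \sum_k f k,
      forall f : 'I_3 -> A, (forall k, G k (f k)) -> \sum_k f k = 0 -> forall k, f k = 0,
      G 0%R 1
    & forall (k l : 'I_3) (a b : A), G k a -> G l b -> G (k + l)%R (a * b)].

(* (L, br) is a braided m-Lie algebra: there are an algebra (A, m) in the
   category and a monomorphism phi : L -> A (given by the images phi k of the
   basis vectors x^k) with phi [ ] = m (phi (x) phi) - m (phi (x) phi) C_{L,L};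
   the last identity is checked on the basis tensors x^i (x) x^j. *)
Definition braided_mLie (br : mor) : Prop :=
  homog 2 1 br /\
  exists (A : algType F) (G : 'I_3 -> A -> Prop) (phi : 'I_3 -> A),
    [/\ graded_algebra G,
        forall k, G k (phi k),
        injective (fun c : {ffun 'I_3 -> F} => \sum_k c k *: phi k)
      & forall i j : 'I_3,
          \sum_k br [:: i; j] [:: k] *: phi k
          = \sum_(c : 2.-tuple 'I_3) idm [:: i; j] c *: (phi (tnth c 0) * phi (tnth c 1))
          - \sum_(c : 2.-tuple 'I_3) braid [:: i; j] c *: (phi (tnth c 0) * phi (tnth c 1))].

Definition BJI (br : mor) : Prop :=
  let T := comp 2 br (tensm 1 1 idm br) in
  eqm 3 1 (fun b c =>
      T b c
    + comp 3 T (comp 3 (tensm 1 1 idm braid_inv) (tensm 2 2 braid idm)) b c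
    + comp 3 T (comp 3 (tensm 2 2 braid_inv idm) (tensm 1 1 idm braid)) b c)
    (fun _ _ => 0).

Definition BAS (br : mor) : Prop :=
  eqm 2 1 br (fun b c => - comp 2 br braid b c).

Definition jacobi_braided_Lie (br : mor) : Prop := homog 2 1 br /\ BJI br.

Definition strict_jacobi_braided_Lie (br : mor) : Prop :=
  homog 2 1 br /\ BJI br /\ BAS br.

Definition majid_braided_Lie (Delta eps br : mor) : Prop :=
  [/\ [/\ homog 1 2 Delta, homog 1 0 eps & homog 2 1 br],
      [/\ eqm 1 3 (comp 2 (tensm 1 2 Delta idm) Delta) (comp 2 (tensm 1 1 idm Delta) Delta),
           eqm 1 1 (comp 2 (tensm 1 0 eps idm) Delta) idm
         & eqm 1 1 (comp 2 (tensm 1 1 idm eps) Delta) idm],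
      eqm 3 1 (comp 2 br (tensm 1 1 idm br))
        (comp 2 br (comp 4 (tensm 2 1 br br)
           (comp 4 (tensm 1 1 idm (tensm 2 2 braid idm)) (tensm 1 2 Delta idm)))),
      eqm 2 2 (comp 2 braid (comp 3 (tensm 2 1 br idm)
                 (comp 3 (tensm 1 1 idm braid) (tensm 1 2 Delta idm))))
        (comp 3 (tensm 1 1 idm br) (tensm 1 2 Delta idm))
    &
      eqm 2 2 (comp 1 Delta br)
        (comp 4 (tensm 2 1 br br)
           (comp 4 (tensm 1 1 idm (tensm 2 2 braid idm)) (tensm 1 2 Delta Delta)))
      /\ eqm 2 0 (comp 1 eps br) (tensm 1 0 eps eps)].

End BraidedLie.

(* Main.v *)
Require Import Defs.
From HB Require Import structures.
From mathcomp Require Import all_boot all_order all_algebra.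
From mathcomp Require Import zify.

Set Implicit Arguments.
Unset Strict Implicit.
Unset Printing Implicit Defensive.
Import GRing.Theory.
Local Open Scope ring_scope.

Section H.
Variable F : fieldType.
Variable q : F.

Lemma sum2_braid (g : 2.-tuple 'I_3 -> F) (i j : 'I_3) :
  \sum_(c : 2.-tuple 'I_3) braid q [:: i; j] c * g c = rq q j i * g [tuple j; i].
Proof.
rewrite (bigD1 [tuple j; i]) //= !eqxx mul1r big1 ?addr0 // => c Hc.
case: c Hc => [[|x [|y [|? ?]]] //= Hs] Hc.
have -> : ((x == j) && (y == i)) = false.
  apply/negP => /andP[/eqP ex /eqP ey]; move: Hc; rewrite -val_eqE /= ex ey eqxx.
  by [].
by rewrite mul0r mul0r.
Qed.

Lemma brLE (i j k : 'I_3) :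
  brL q [:: i; j] [:: k] = ((i + j)%N == k)%:R * (1 - q ^+ (j * i)).
Proof.
rewrite /brL /Defs.comp sum2_braid /= /rq addnC.
by rewrite mulrBr mulr1 mulrC.
Qed.

Lemma brL_nz (s t : seq 'I_3) : brL q s t != 0 ->
  exists i j k, [/\ s = [:: i; j], t = [:: k], i = 1%N :> nat,
       j = 1%N :> nat & k = 2%N :> nat].
Proof.
case: s => [|i [|j [|x s]]].
- by rewrite /brL /Defs.comp /= big1 ?subr0 ?eqxx // => c _; rewrite mul0r.
- by rewrite /brL /Defs.comp /= big1 ?subr0 ?eqxx // => c _; rewrite mul0r.
- case: t => [|k [|y t]].
  + rewrite /brL /Defs.comp /= big1 ?subr0 ?eqxx // => c _.
    by case: c => [[|a [|b [|? ?]]] //= _]; rewrite mulr0.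
  + rewrite brLE => H; exists i, j, k.
    have [Hk Hq] : ((i + j)%N == k) /\ q ^+ (j * i) != 1.
      move: H; case E: ((i + j)%N == k); last by rewrite mul0r eqxx.
      by rewrite mul1r subr_eq0 eq_sym.
    move/eqP: Hk => Hk.
    have Hi : (0 < i)%N. { case: (posnP i) Hq => // ->; by rewrite muln0 expr0 eqxx. }
    have Hj : (0 < j)%N. { case: (posnP j) Hq => // ->; by rewrite mul0n expr0 eqxx. }
    have := ltn_ord k; split => //; lia.
  + rewrite /brL /Defs.comp /= big1 ?subr0 ?eqxx // => c _.
    by case: c => [[|a [|b [|? ?]]] //= _]; rewrite mulr0.
- by rewrite /brL /Defs.comp /= big1 ?subr0 ?eqxx // => c _; rewrite mul0r.
Qed.

Lemma homog_brL : homog 2 1 (brL q).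
Proof.
move=> b c /brL_nz [i [j [k [-> -> Hi Hj Hk]]]].
by rewrite /degt !big_cons !big_nil Hi Hj Hk.
Qed.

Lemma T0 b d : Defs.comp 2 (brL q) (tensm 1 1 (idm F) (brL q)) b d = 0.
Proof.
rewrite /Defs.comp big1 // => c _.
have [H|H] := eqVneq (brL q c d) 0; first by rewrite H mulr0.
move/brL_nz: H => [i [j [k [Hc _ Hi Hj _]]]].
rewrite /tensm Hc /=.
have [H2|H2] := eqVneq (brL q (drop 1 b) [:: j]) 0; first by rewrite H2 !mulr0 mul0r.
move/brL_nz: H2 => [i' [j' [k' [_ [Hk] _ _ Hk']]]].
by move: Hk'; rewrite -Hk Hj.
Qed.

Lemma compZ k (g f : mor F) (Hg : forall x y, g x y = 0) b d :
  Defs.comp k g f b d = 0.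
Proof. by rewrite /Defs.comp big1 // => t _; rewrite Hg mulr0. Qed.

Lemma BJI_brL : BJI q (brL q).
Proof.
move=> b c /=.
by rewrite !(compZ _ _ T0) T0 !addr0.
Qed.

Lemma notBAS (hq : (3.-primitive_root q)%R) : ~ BAS q (brL q).
Proof.
move=> HB; have := HB [tuple inord 1; inord 1] [tuple inord 2].
rewrite /Defs.comp /=. rewrite sum2_braid /= !brLE /rq !inordK //=.
rewrite !mul1r expr1 => H.
have q1 : q != 1 by rewrite -(prim_order_dvd hq 1).
have q3 := prim_expr_order hq.
have : (1 - q) * (1 + q) = 0.
  by rewrite mulrDr mulr1 [(1 - q) * q]mulrC {1}H addNr.
move/eqP; rewrite mulf_eq0 subr_eq0 eq_sym (negbTE q1) /= addr_eq0 => /eqP qm.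
have qm' : q = -1 by rewrite qm opprK.
move: q3 q1; rewrite qm' -signr_odd /= expr1 => ->.
by rewrite eqxx.
Qed.

Lemma noMajid : ~ (exists Delta eps : mor F, majid_braided_Lie q Delta eps (brL q)).
Proof.
move=> [Delta [eps [[_ Heps _] [_ Hcu _] _ _ [_ He]]]].
have H0 : eps [:: ord0] [::] = 0.
  have := He [tuple ord0; ord0] [tuple].
  rewrite /Defs.comp big1 /=; last first.
    move=> c _; have [->|/brL_nz] := eqVneq (brL q [:: ord0; ord0] c) 0.
      by rewrite mul0r.
    by move=> [i [j [k [[<- _] _ Hi _ _]]]].
  rewrite /tensm /= => /esym/eqP; rewrite mulf_eq0 orbb => /eqP //.
have Hk k : eps [:: k] [::] = 0.
  have [->|/(Heps [tuple k] [tuple])] := eqVneq (eps [:: k] [::]) 0 => //.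
  rewrite /degt /= !big_cons !big_nil addn0 modn_small // => Hk0.
  by rewrite (_ : k = ord0) //; apply: val_inj.
have := Hcu [tuple ord0] [tuple ord0].
rewrite /Defs.comp big1 /=.
  by rewrite /idm eqxx => /eqP; rewrite eq_sym oner_eq0.
move=> c _; case: c => [[|a [|b [|? ?]]] //= _].
by rewrite /tensm /= Hk !mul0r mulr0.
Qed.

Definition phin (n : nat) : 'M[F]_3 := \matrix_(a, b) ((b : nat) == a + n)%N%:R.

Lemma phinM m n : phin m * phin n = phin (m + n).
Proof.
apply/matrixP => a b; rewrite -mulmxE !mxE.
case: (ltnP (a + m) 3) => H.
  rewrite (bigD1 (Ordinal H)) //= !mxE eqxx mul1r big1 ?addr0 ?addnA // => l Hl.
  rewrite !mxE; have /negbTE -> : (l : nat) != (a + m)%N.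
    by apply: contra Hl => /eqP e; apply/eqP/val_inj.
  by rewrite mul0r.
rewrite big1.
  have /negbTE -> : (b : nat) != (a + (m + n))%N.
    by have := ltn_ord b; apply: contraTneq => ->; rewrite -leqNgt; lia.
  by [].
move=> l _; rewrite !mxE; have /negbTE -> : (l : nat) != (a + m)%N.
  by have := ltn_ord l; apply: contraTneq => ->; rewrite -leqNgt; lia.
by rewrite mul0r.
Qed.

Lemma phin_big n : (3 <= n)%N -> phin n = 0.
Proof.
move=> H; apply/matrixP => a b; rewrite !mxE.
have /negbTE -> // : (b : nat) != (a + n)%N.
by have := ltn_ord b; apply: contraTneq => ->; rewrite -leqNgt; lia.
Qed.

Lemma sum_ind (n : nat) : \sum_(k : 'I_3) ((n == k :> nat)%:R : F) *: phin k = phin n.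
Proof.
case: (ltnP n 3) => H.
  rewrite (bigD1 (Ordinal H)) //= eqxx scale1r big1 ?addr0 // => l Hl.
  have /negbTE -> : n != l by apply: contra Hl => /eqP e; apply/eqP/val_inj.
  by rewrite scale0r.
rewrite phin_big // big1 // => l _.
have /negbTE -> : n != l.
  by have := ltn_ord l; apply: contraTneq => <-; rewrite -leqNgt.
by rewrite scale0r.
Qed.

Lemma sum2_braidZ (V : lmodType F) (g : 2.-tuple 'I_3 -> V) (i j : 'I_3) :
  \sum_(c : 2.-tuple 'I_3) braid q [:: i; j] c *: g c = rq q j i *: g [tuple j; i].
Proof.
rewrite (bigD1 [tuple j; i]) //= !eqxx mul1r big1 ?addr0 // => c Hc.
case: c Hc => [[|x [|y [|? ?]]] //= Hs] Hc.
have -> : ((x == j) && (y == i)) = false.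
  apply/negP => /andP[/eqP ex /eqP ey]; move: Hc; rewrite -val_eqE /= ex ey eqxx.
  by [].
by rewrite mul0r scale0r.
Qed.

Lemma sum2_idmZ (V : lmodType F) (g : 2.-tuple 'I_3 -> V) (i j : 'I_3) :
  \sum_(c : 2.-tuple 'I_3) idm F [:: i; j] c *: g c = g [tuple i; j].
Proof.
rewrite (bigD1 [tuple i; j]) //= /idm eqxx scale1r big1 ?addr0 // => c Hc.
have /negbTE -> : [:: i; j] != c.
  by apply: contra Hc => /eqP e; apply/eqP/val_inj.
by rewrite scale0r.
Qed.


Definition Gr (k : 'I_3) (A : 'M[F]_3) : Prop :=
  forall a b : 'I_3, b != a + k -> A a b = 0.

Lemma Gr_alg : graded_algebra (A := 'M[F]_3) Gr.
Proof.
split.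
- move=> k; split; first by move=> a b _; rewrite mxE.
  by move=> c x y Hx Hy a b H; rewrite !mxE Hx // Hy // mulr0 addr0.
- move=> A; exists (fun k => \matrix_(a, b) ((b == a + k)%:R * A a b)); split.
    by move=> k a b /negbTE H; rewrite mxE H mul0r.
  apply/matrixP => a b; rewrite summxE (bigD1 (b - a)) //= mxE.
  rewrite [a + _]addrC subrK eqxx mul1r big1 ?addr0 // => k Hk.
  rewrite mxE; have /negbTE -> : b != a + k.
    by apply: contra Hk => /eqP ->; rewrite [a + _]addrC addrK.
  by rewrite mul0r.
- move=> f Hf Hs k; apply/matrixP => a b; rewrite mxE.
  have [E|E] := eqVneq b (a + k); last by rewrite Hf.
  have := congr1 (fun M : 'M[F]_3 => M a b) Hs; rewrite /= summxE mxE.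
  rewrite (bigD1 k) //= big1 ?addr0 // => l Hl.
  apply: Hf; rewrite E; apply: contra Hl => /eqP H; apply/eqP.
  exact: esym (addrI a H).
- by move=> a b; rewrite mxE addr0 eq_sym => /negbTE ->.
- move=> k l x y Hx Hy a b H; rewrite -mulmxE mxE big1 // => c _.
  have [E|E] := eqVneq c (a + k); last by rewrite Hx // mul0r.
  rewrite Hy ?mulr0 // E -addrA //.
Qed.

Lemma scalE (a : F) (M : 'M[F]_3) i j : (a *: M) i j = a * M i j.
Proof. by rewrite mxE. Qed.

Lemma Gr_phin (k : 'I_3) : Gr k (phin k).
Proof.
move=> a b H; rewrite mxE; case: eqP => // E; case/eqP: H; apply: val_inj.
by rewrite /= -E modn_small.
Qed.

Lemma mLie : braided_mLie q (brL q).
Proof.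
split; first exact: homog_brL.
exists 'M[F]_3, Gr, (fun k : 'I_3 => phin k); split.
- exact: Gr_alg.
- exact: Gr_phin.
- move=> c c' /= E; apply/ffunP => k.
  have := congr1 (fun M : 'M[F]_3 => M ord0 k) E; rewrite /= !summxE.
  rewrite (bigD1 k) //= [in RHS](bigD1 k) //= !scalE !mxE !add0n eqxx !mulr1.
  rewrite !big1 ?addr0 //.
  1,2: move=> l Hl; rewrite scalE !mxE add0n.
  1,2: have /negbTE -> : (k : nat) != l by apply: contra Hl => /eqP e; apply/eqP/val_inj.
  1,2: by rewrite mulr0.
- move=> i j.
  rewrite sum2_idmZ sum2_braidZ !phinM /rq /tnth /= [(j + i)%N]addnC.
  under eq_bigr do rewrite brLE mulrC -scalerA.
  by rewrite -scaler_sumr sum_ind scalerBl scale1r.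
Qed.

End H.

Theorem mainTheorem5 (F : fieldType) (q : F) (hq : (3.-primitive_root q)%R) :
  [/\ braided_mLie q (brL q),
      jacobi_braided_Lie q (brL q),
      ~ strict_jacobi_braided_Lie q (brL q),
      ~ BAS q (brL q)
    & ~ (exists Delta eps : mor F, majid_braided_Lie q Delta eps (brL q))].
Proof.
split.
- exact: mLie.
- split; [exact: homog_brL | exact: BJI_brL].
- by move=> [_ [_ H]]; exact: (notBAS hq H).
- exact: notBAS.
- exact: noMajid.
Qed.
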